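(* Let $D$ be a consistent domain, $a$ a sensing action and $(M,s)$ a state such that $a$ is executable in $(M,s)$ and $(M,s)$ is consistency preserving for $a$. Let $(M',s')\in\Phi^s_D(a,(M,s))$. Then: (1) for every $f\in Sensed_D(a)$ and $\ell\in\{f,\neg f\}$, if $(M,s)\models\ell$ then $(M',s')\models\mathbf C_{F_D(a,M,s)}\ell$; (2) for every $f\in Sensed_D(a)$, $(M',s')\models\mathbf C_{P_D(a,M,s)}\big(\mathbf C_{F_D(a,M,s)}f\vee\mathbf C_{F_D(a,M,s)}\neg f\big)$; (3) for every $i\in O_D(a,M,s)$ and every belief formula $\psi$, $(M',s')\models\mathbf B_i\psi$ iff $(M,s)\models\mathbf B_i\psi$.
   Context: Fix a finite set of agents $\mathcal{AG}=\{1,\dots,n\}$, a set $\mathcal F$ of fluents and a set of actions. Belief formulae are built from propositional (fluent) formulae over $\mathcal F$ using $\mathbf B_i\varphi$ ($i\in\mathcal{AG}$), Boolean connectives, and $\mathbf E_\alpha\varphi,\mathbf C_\alpha\varphi$ for nonempty $\alpha\subseteq\mathcal{AG}$. A Kripke structure $M$ has worlds $M[S]$, interpretations $M[\pi](u)\subseteq\mathcal F$, and relations $M[i]\subseteq M[S]\times M[S]$; a state is $(M,s)$ with $s\in M[S]$. Satisfaction: fluent formulae are evaluated in $M[\pi](s)$; $(M,s)\models\mathbf B_i\varphi$ iff $(M,t)\models\varphi$ for all $t$ with $(s,t)\in M[i]$; Boolean connectives as usual; $\mathbf E_\alpha\varphi$ iff $\mathbf B_i\varphi$ for all $i\in\alpha$;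 $\mathbf C_\alpha\varphi$ iff $\mathbf E^k_\alpha\varphi$ for all $k\ge 0$ ($\mathbf E^0_\alpha\varphi=\varphi$, $\mathbf E^{k+1}_\alpha\varphi=\mathbf E_\alpha\mathbf E^k_\alpha\varphi$). A domain $D$ contains for each action $a$ exactly one ''executable $a$ if $\psi$'' ($\psi$ a belief formula; $a$ is executable in $(M,u)$ iff $(M,u)\models\psi$), for sensing actions statements ''$a$ determines $f$'' ($f\in\mathcal F$), with $Sensed_D(a)=\{f\mid$ ''$a$ determines $f$'' $\in D\}$, and observability statements ''$X$ observes $a$ if $\varphi$'', ''$X$ aware\_of $a$ if $\varphi$'' ($X$ agent, $\varphi$ fluent formula). $F_D(a,M,s)$ (full observers) is the set of $X$ with some ''$X$ observes $a$ if $\varphi$'' in $D$ and $(M,s)\models\varphi$; $P_D(a,M,s)$ (partial observers) is defined likewise with ''aware\_of''; $O_D(a,M,s)$ is the set of remaining agents. $D$ is consistent if in particular $F_D(a,M,s)\cap P_D(a,M,s)=\emptyset$ always (and effects of world-altering actions are consistent). Transition $\Phi^s_D$: if $a$ is executable in $(M,s)$, $\Phi^s_D(a,(M,s))=\{(M',s')\}$ built as follows. Let $c$ be a bijection from $M[S]$ onto a set of fresh worlds. $M''$ has worlds $c(u)$ for those $u\in M[S]$ with $a$ executable in $(M,u)$, with interpretation of $c(u)$ equal to $M[\pi](u)$; for $i\in F_D(a,M,s)$, $(c(u),c(v))\in M''[i]$ iff both are worlds of $M''$, $(u,v)\in M[i]$ and $u,v$ agree on every $f\in Sensed_D(a)$;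 for $i\in P_D(a,M,s)$, $(c(u),c(v))\in M''[i]$ iff both are worlds of $M''$ and $(u,v)\in M[i]$; for $i\in O_D(a,M,s)$, $M''[i]=\emptyset$. Then $M'[S]=M[S]\cup M''[S]$ with interpretations inherited; $M'[i]=M[i]\cup M''[i]$ for $i\in F_D(a,M,s)\cup P_D(a,M,s)$; $M'[i]=M[i]\cup\{(c(u),v)\mid c(u)\in M''[S],(u,v)\in M[i]\}$ for $i\in O_D(a,M,s)$; and $s'=c(s)$. $(M,s)$ is consistency preserving for the sensing action $a$ if $(M,u)\not\models\mathbf B_if\vee\mathbf B_i\neg f$ for every $u\in M[S]$, every $i\in F_D(a,M,s)\cup P_D(a,M,s)$ and every $f\in Sensed_D(a)$. *)

(* Defs.v *)
From mathcomp Require Import all_boot.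
Set Implicit Arguments. Unset Strict Implicit. Unset Printing Implicit Defensive.

Section Defs.
Variables (F : eqType) (AG : finType) (A : eqType).

Inductive fform : Type :=
| FAtom of F
| FTrue
| FNot of fform
| FAnd of fform & fform
| FOr of fform & fform.

Fixpoint feval (I : F -> bool) (p : fform) : bool :=
  match p with
  | FAtom f => I f
  | FTrue => true
  | FNot q => ~~ feval I q
  | FAnd q r => feval I q && feval I r
  | FOr q r => feval I q || feval I r
  end.

Inductive bform : Type :=
| BFl of fform
| BNot of bform
| BAnd of bform & bform
| BOr of bform & bform
| BB of AG & bform
| BE of {set AG} & bform
| BC of {set AG} & bform.

Record kripke (W : Type) := Kripke {
  kS : W -> Prop;
  kpi : W -> F -> bool;
  kR : AG -> W -> W -> Prop
}.

Definition kwf W (M : kripke W) : Prop :=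
  forall i u v, kR M i u v -> kS M u /\ kS M v.

(* (M,u) |= E^k_alpha phi, given the truth set P of phi *)
Fixpoint satEk W (M : kripke W) (alpha : {set AG}) (P : W -> Prop) (k : nat) (u : W)
  : Prop :=
  match k with
  | 0 => P u
  | k.+1 => forall i, i \in alpha -> forall t, kR M i u t -> satEk M alpha P k t
  end.

Fixpoint sat W (M : kripke W) (u : W) (phi : bform) {struct phi} : Prop :=
  match phi with
  | BFl p => feval (kpi M u) p
  | BNot q => ~ sat M u q
  | BAnd q r => sat M u q /\ sat M u r
  | BOr q r => sat M u q \/ sat M u r
  | BB i q => forall t, kR M i u t -> sat M t q
  | BE alpha q => forall i, i \in alpha -> forall t, kR M i u t -> sat M t q
  | BC alpha q => forall k, satEk M alpha (fun t => sat M t q) k u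
  end.

Record domain := Domain {
  d_exec : A -> bform;                 (* "executable a if psi" (exactly one per a) *)
  d_determines : seq (A * F);
  d_observes : seq (AG * A * fform);
  d_aware : seq (AG * A * fform)
}.

Definition executable (D : domain) W (M : kripke W) (a : A) (u : W) : Prop :=
  sat M u (d_exec D a).

Definition Sensed (D : domain) (a : A) : seq F :=
  [seq p.2 | p <- d_determines D & p.1 == a].

Definition is_sensing (D : domain) (a : A) : Prop := exists f, f \in Sensed D a.

Definition FD (D : domain) (a : A) W (M : kripke W) (s : W) : {set AG} :=
  [set X | has (fun st : AG * A * fform =>
                  [&& st.1.1 == X, st.1.2 == a & feval (kpi M s) st.2]) (d_observes D)].

Definition PD (D : domain) (a : A) W (M : kripke W) (s : W) : {set AG} :=
  [set X | has (fun st : AG * A * fform =>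
                  [&& st.1.1 == X, st.1.2 == a & feval (kpi M s) st.2]) (d_aware D)].

Definition OD (D : domain) (a : A) W (M : kripke W) (s : W) : {set AG} :=
  ~: (FD D a M s :|: PD D a M s).

Definition consistent_domain (D : domain) : Prop :=
  forall (a : A) (W : Type) (M : kripke W) (s : W),
    [disjoint FD D a M s & PD D a M s].

Definition consistency_preserving (D : domain) (a : A) W (M : kripke W) (s : W) : Prop :=
  forall u, kS M u -> forall i, i \in FD D a M s :|: PD D a M s ->
  forall f, f \in Sensed D a ->
    ~ sat M u (BOr (BB i (BFl (FAtom f))) (BB i (BFl (FNot (FAtom f))))).

(* Transition Phi^s_D for a sensing action.  The fresh copy c(u) of a world u
   is represented as [inr u]; the old worlds are [inl u]. *)
Definition new_world (D : domain) (a : A) W (M : kripke W) (u : W) : Prop :=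
  kS M u /\ executable D M a u.

Definition agree_sensed (D : domain) (a : A) W (M : kripke W) (u v : W) : Prop :=
  forall f, f \in Sensed D a -> kpi M u f = kpi M v f.

Definition trans_model (D : domain) (a : A) W (M : kripke W) (s : W) : kripke (W + W) :=
  {| kS := fun x => match x with
                    | inl u => kS M u
                    | inr u => new_world D a M u
                    end;
     kpi := fun x => match x with inl u => kpi M u | inr u => kpi M u end;
     kR := fun i x y =>
       match x, y with
       | inl u, inl v => kR M i u v
       | inr u, inr v =>
           new_world D a M u /\ new_world D a M v /\ kR M i u v /\
           (i \in FD D a M s -> agree_sensed D a M u v) /\
           (i \in FD D a M s :|: PD D a M s)
       | inr u, inl v =>
           new_world D a M u /\ kR M i u v /\ i \in OD D a M s
       | inl _, inr _ => False
       end |}.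

Definition Phi (D : domain) (a : A) W (M : kripke W) (s : W) (M' : kripke (W + W)) (s' : W + W)
  : Prop :=
  executable D M a s /\ M' = trans_model D a M s /\ s' = inr s.

End Defs.

(* Main.v *)
Require Import Defs.
From mathcomp Require Import all_boot.

Section Aux.
Variables (F : eqType) (AG : finType) (A : eqType).
Variables (D : domain F AG A) (a : A) (W : Type) (M : kripke F AG W) (s : W).

Lemma OD_notFP {i} : i \in OD D a M s -> i \in FD D a M s :|: PD D a M s -> False.
Proof. by rewrite /OD inE => /negP. Qed.

Lemma FP_F {i} : i \in FD D a M s -> i \in FD D a M s :|: PD D a M s.
Proof. by move=> H; rewrite in_setU H. Qed.

Lemma FP_P {i} : i \in PD D a M s -> i \in FD D a M s :|: PD D a M s.
Proof. by move=> H; rewrite in_setU H orbT. Qed.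

Let M' := trans_model D a M s.

Lemma satEk_inl (alpha : {set AG}) (P' : W + W -> Prop) (P : W -> Prop) :
  (forall v, P' (inl v) <-> P v) ->
  forall k u, satEk M' alpha P' k (inl u) <-> satEk M alpha P k u.
Proof.
move=> HP; elim=> [|k IH] u /=; first exact: HP.
split=> H i Hi t.
- move=> Hr; apply (proj1 (IH t)); exact: (H i Hi (inl t)).
- case: t => [t|t] /= Hr; last by [].
  apply (proj2 (IH t)); exact (H i Hi t Hr).
Qed.

Lemma sat_inl psi : forall u, sat M' (inl u) psi <-> sat M u psi.
Proof.
elim: psi => [p|q IH|q IHq r IHr|q IHq r IHr|j q IH|al q IH|al q IH] u /=.
- by [].
- by move: (IH u) => [H1 H2]; split=> H3 H4; apply: H3; auto.
- by move: (IHq u) (IHr u) => [H1 H2] [H3 H4]; split=> [[]|[]]; auto.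
- by move: (IHq u) (IHr u) => [H1 H2] [H3 H4]; split=> [[]|[]]; auto.
- split=> H t.
  + move=> Hr; apply (proj1 (IH t)); exact: (H (inl t) Hr).
  + case: t => [t|t] /= Hr; last by []; apply (proj2 (IH t)); exact (H t Hr).
- split=> H i Hi t.
  + move=> Hr; apply (proj1 (IH t)); exact: (H i Hi (inl t) Hr).
  + case: t => [t|t] /= Hr; last by []; apply (proj2 (IH t)); exact (H i Hi t Hr).
- have HP : forall v, sat M' (inl v) q <-> sat M v q by move=> v; apply: IH.
  split=> H k.
  + exact: (proj1 (@satEk_inl al (fun t => sat M' t q) (fun t => sat M t q) HP k u) (H k)).
  + exact: (proj2 (@satEk_inl al (fun t => sat M' t q) (fun t => sat M t q) HP k u) (H k)).
Qed.

Lemma CF_lemma f (b : bool) l :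
  f \in Sensed D a ->
  (forall I, feval I l = (I f == b)) ->
  forall k u, kpi M u f = b -> satEk M' (FD D a M s) (fun t => sat M' t (BFl AG l)) k (inr u).
Proof.
move=> Hf Hl; elim=> [|k IH] u Hu /=.
  by rewrite Hl Hu.
move=> i Hi [t|t] /=.
- move=> [_ [_ HO]]; exfalso; exact: (OD_notFP HO (FP_F Hi)).
- move=> [_ [_ [_ [Hag _]]]]; apply: IH; rewrite -(Hag Hi f Hf); exact: Hu.
Qed.

Lemma CP_lemma (f : F) (Q : W + W -> Prop) :
  (forall u, Q (inr u)) ->
  forall k u, satEk M' (PD D a M s) Q k (inr u).
Proof.
move=> HQ; elim=> [|k IH] u /=; first exact: HQ.
move=> i Hi [t|t] /=.
- move=> [_ [_ HO]]; exfalso; exact: (OD_notFP HO (FP_P Hi)).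
- move=> _; exact: IH.
Qed.

End Aux.

Theorem proposition3 (F : eqType) (AG : finType) (A : eqType)
  (D : domain F AG A) (a : A) (W : Type) (M : kripke F AG W) (s : W)
  (M' : kripke F AG (W + W)) (s' : W + W) :
  kwf M -> kS M s ->
  consistent_domain D ->
  is_sensing D a ->
  executable D M a s ->
  consistency_preserving D a M s ->
  Phi D a M s M' s' ->
  (* (1) *)
  (forall f, f \in Sensed D a ->
     forall l, l = FAtom f \/ l = FNot (FAtom f) ->
       sat M s (BFl AG l) -> sat M' s' (BC (FD D a M s) (BFl AG l))) /\
  (* (2) *)
  (forall f, f \in Sensed D a ->
     sat M' s' (BC (PD D a M s)
                  (BOr (BC (FD D a M s) (BFl AG (FAtom f)))
                       (BC (FD D a M s) (BFl AG (FNot (FAtom f))))))) /\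
  (* (3) *)
  (forall i, i \in OD D a M s ->
     forall psi, sat M' s' (BB i psi) <-> sat M s (BB i psi)).
Proof.
move=> _ HsS _ _ Hex _ [_ [-> ->]].
split; [|split].
- move=> f Hf l [->|->] /= Hs k.
  + refine (@CF_lemma _ _ _ D a W M s f true (FAtom f) Hf _ k s _).
    * by move=> I /=; case: (I f).
    * exact: Hs.
  + refine (@CF_lemma _ _ _ D a W M s f false (FNot (FAtom f)) Hf _ k s _).
    * by move=> I /=; case: (I f).
    * by move: Hs; case: (kpi M s f).
- move=> f Hf k /=.
  refine (@CP_lemma _ _ _ D a W M s f _ _ k s).
  move=> u /=.
  case Hu: (kpi M u f); [left|right] => k'.
  + refine (@CF_lemma _ _ _ D a W M s f true (FAtom f) Hf _ k' u Hu).
    by move=> I /=; case: (I f).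
  + refine (@CF_lemma _ _ _ D a W M s f false (FNot (FAtom f)) Hf _ k' u Hu).
    by move=> I /=; case: (I f).
- move=> i Hi psi /=; split=> H t.
  + move=> Hr; apply/sat_inl; apply: (H (inl t)) => /=.
    by split; [split|split].
  + case: t => t /=.
    * move=> [_ [Hr _]]; apply/sat_inl; exact: H.
    * move=> [_ [_ [_ [_ HFP]]]]; exfalso; exact: (@OD_notFP _ _ _ D a W M s i Hi HFP).
Qed.
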